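(* Let $p$ be a prime and $G$ a finite metacyclic $p$-group. Then every non-abelian subgroup $H$ of $G$ satisfies $C_G(H)\le H$.
   Context: A group is metacyclic if it has a cyclic normal subgroup with cyclic quotient. $C_G(H)$ denotes the centralizer of $H$ in $G$. *)

(* Defs.v *)
From mathcomp Require Import all_boot all_fingroup all_solvable.

(* Main.v *)
Require Import Defs.
From mathcomp Require Import all_boot all_fingroup all_solvable.
Set Implicit Arguments. Unset Strict Implicit. Unset Printing Implicit Defensive.
Local Open Scope group_scope.

Lemma cyclic_pgroup_chain (gT : finGroupType) (p : nat) (X B C : {group gT}) :
  prime p -> p.-group X -> cyclic X -> B \subset X -> C \subset X ->
  B \subset C \/ C \subset B.
Proof.
move=> pp pX cX sBX sCX.
have pB := pgroupS sBX pX; have pC := pgroupS sCX pX.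
rewrite -(cardSg_cyclic cX sBX sCX) -(cardSg_cyclic cX sCX sBX).
rewrite (card_pgroup pB) (card_pgroup pC).
case: (leqP (logn p #|B|) (logn p #|C|)) => h.
  by left; apply: dvdn_exp2l.
by right; apply: dvdn_exp2l; apply: ltnW.
Qed.

Theorem proposition6p7 (gT : finGroupType) (p : nat) (G H : {group gT}) :
  prime p -> p.-group G -> metacyclic G ->
  H \subset G -> ~~ abelian H -> 'C_G(H) \subset H.
Proof.
move=> pp pG /metacyclicP[N [cycN nsNG cycGq]] sHG nabH.
have sNG := normal_sub nsNG; have nNG := normal_norm nsNG.
have pN := pgroupS sNG pG.
have pGq : p.-group (G / N) := quotient_pgroup N pG.
have abN := cyclic_abelian cycN.
have cycHq : cyclic (H / N) := cyclicS (quotientS N sHG) cycGq.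
have nNH : H \subset 'N(N) := subset_trans sHG nNG.
case/cyclicP: cycHq => xb defHq.
have : xb \in H / N by rewrite defHq cycle_id.
case/morphimP=> h Nh Hh defxb.
set A := (H :&: N)%G.
have cosetE u : u \in 'N(N) -> forall k, coset N (u ^+ k) = coset N u ^+ k.
  by move=> Nu k; rewrite morphX.
have sHAh : H \subset A * <[h]>.
  apply/subsetP => u Hu.
  have : coset N u \in <[xb]> by rewrite -defHq mem_quotient.
  case/cycleP=> k; rewrite defxb -cosetE // => eq_u.
  have Nu : u \in 'N(N) := subsetP nNH u Hu.
  have : u \in N :* (h ^+ k).
    by apply/rcoset_kercosetP => //; rewrite groupX.
  rewrite mem_rcoset => uhN.
  rewrite -(mulgKV (h ^+ k) u).
  apply: mem_mulg; last by rewrite mem_cycle.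
  by rewrite inE uhN groupM ?groupV ?groupX.
have nAh : ~~ (A \subset 'C[h]).
  apply: contra nabH => sAC.
  suff abAh : abelian (A * <[h]>) by exact: (abelianS sHAh abAh).
  have abA : abelian A := abelianS (subsetIr _ _) abN.
  have sAh : A \subset 'C(<[h]>) by rewrite cent_cycle.
  rewrite /abelian centM subsetI.
  apply/andP; split; apply: mul_subG => //.
  - by rewrite centsC.
  - exact: cycle_abelian.
apply/subsetP => c /setIP [Gc cCH].
have Nc : c \in 'N(N) := subsetP nNG c Gc.
have Gh : h \in G := subsetP sHG h Hh.
have sc : <[coset N c]> \subset G / N by rewrite cycle_subG mem_quotient.
have sh : <[coset N h]> \subset G / N by rewrite cycle_subG mem_quotient.
case: (cyclic_pgroup_chain pp pGq cycGq sc sh) => sch; last first.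
  exfalso; move: nAh; apply/negP/negPn.
  have := subsetP sch _ (cycle_id (coset N h)).
  case/cycleP=> k; rewrite -cosetE // => eq_h.
  have : h \in N :* (c ^+ k) by apply/rcoset_kercosetP => //; rewrite groupX.
  rewrite mem_rcoset => hcN.
  apply/subsetP => a /setIP [Ha Na]; apply/cent1P.
  rewrite -(mulgKV (c ^+ k) h).
  apply: commuteM.
    by apply: (centsP abN).
  apply: commuteX; apply: commute_sym; exact: (centP cCH a Ha).
have := subsetP sch _ (cycle_id (coset N c)).
case/cycleP=> k; rewrite -cosetE // => eq_c.
have : c \in N :* (h ^+ k) by apply/rcoset_kercosetP => //; rewrite groupX.
rewrite mem_rcoset => chN.
set n := c * (h ^+ k)^-1 in chN.
have nCh : n \in 'C[h].
  apply/cent1P; rewrite /n; apply: commute_sym; apply: commuteM.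
    apply: commute_sym; exact: (centP cCH h Hh).
  by apply: commuteV; apply: commuteX.
have sNhA : N :&: 'C[h] \subset A.
  have sA : A \subset N := subsetIr _ _.
  case: (cyclic_pgroup_chain pp pN cycN sA (subsetIl N 'C[h])) => // sAC.
  by case/negP: nAh; apply: subset_trans sAC (subsetIr _ _).
have nA : n \in A by apply: (subsetP sNhA); rewrite inE chN nCh.
rewrite -(mulgKV (h ^+ k) c); apply: groupM.
  by case/setIP: nA.
by rewrite groupX.
Qed.
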